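(* Let $\alpha(x)$ and $\beta(x)$ be real rational functions each of the form \[x-\tau_0-\sum_{m=1}^{M}\frac{\lambda_m}{x-\tau_m}\] with finitely many terms, real numbers $\tau_m$, and real $\lambda_m>0$ (depending on the function). Assume that at least one of $\alpha,\beta$ has at least one pole. Let $\lambda>0$ and $\theta\in\mathbb{R}$. If $\beta(\theta)=0$ and $\theta$ is not a pole of $\alpha$, then there exists $\theta'\in(\theta-\sqrt{\lambda},\theta+\sqrt{\lambda})$ such that $\beta(\theta')$ is neither $0$ nor a pole, and $\alpha(\theta')-\frac{\lambda}{\beta(\theta')}=0$. *)

(* Defs.v *)
From mathcomp Require Import all_boot all_order all_algebra.
From mathcomp Require Import reals.
Set Implicit Arguments. Unset Strict Implicit. Unset Printing Implicit Defensive.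
Import Order.TTheory GRing.Theory Num.Theory.
Local Open Scope ring_scope.

(* A rational function of the form
     x - tau0 - \sum_{m=1}^M lambda_m / (x - tau_m)
   is encoded by tau0 and the finite list of pairs (lambda_m, tau_m). *)
Record pfrac (R : realType) := PFrac { pf_tau0 : R; pf_terms : seq (R * R) }.

Definition pf_valid (R : realType) (f : pfrac R) : Prop :=
  all (fun p : R * R => 0 < p.1) (pf_terms f).

Definition pf_pole (R : realType) (f : pfrac R) (x : R) : bool :=
  x \in map snd (pf_terms f).

Definition pf_has_pole (R : realType) (f : pfrac R) : bool :=
  pf_terms f != [::].

(* value of f at x (meaningful when x is not a pole) *)
Definition pf_eval (R : realType) (f : pfrac R) (x : R) : R :=
  x - pf_tau0 f - \sum_(p <- pf_terms f) p.1 / (x - p.2).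

(* Main.v *)
Require Import Defs.
From mathcomp Require Import all_boot all_order all_algebra.
From mathcomp Require Import reals.
From mathcomp Require Import ring lra.
Import Order.TTheory GRing.Theory Num.Theory.
Local Open Scope ring_scope.

Definition ev {R : realType} (t0 : R) (s : seq (R * R)) (x : R) : R :=
  x - t0 - \sum_(p <- s) p.1 / (x - p.2).

Definition SS {R : realType} (s : seq (R * R)) (x y : R) : R :=
  \sum_(p <- s) p.1 / ((x - p.2) * (y - p.2)).

Definition pfree {R : realType} (s : seq (R * R)) (a b : R) : bool :=
  all (fun p : R * R => (p.2 < a) || (b < p.2)) s.

Lemma sum_diff {R : realType} (s : seq (R * R)) (x y : R) :
  x \notin map snd s -> y \notin map snd s ->
  \sum_(p <- s) p.1 / (x - p.2) - \sum_(p <- s) p.1 / (y - p.2)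
  = (y - x) * SS s x y.
Proof.
rewrite /SS; elim: s => [|p s IH] /=; first by move=> _ _; rewrite !big_nil; ring.
rewrite !in_cons !negb_or => /andP[xp xs] /andP[yp ys].
rewrite !big_cons mulrDr -(IH xs ys).
have hx : x - p.2 != 0 by rewrite subr_eq0.
have hy : y - p.2 != 0 by rewrite subr_eq0.
field; apply/andP; split => //.
Qed.

Lemma ev_diff {R : realType} t0 (s : seq (R * R)) (x y : R) :
  x \notin map snd s -> y \notin map snd s ->
  ev t0 s y = ev t0 s x + (y - x) * (1 + SS s x y).
Proof.
move=> hx hy; rewrite /ev.
have E := @sum_diff R s x y hx hy.
rewrite mulrDr mulr1 -E; ring.
Qed.

Lemma pfree_notin {R : realType} {s : seq (R * R)} {a b x : R} :
  pfree s a b -> a <= x <= b -> x \notin map snd s.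
Proof.
move=> /allP H /andP[ax xb]; apply/mapP => [[p ps E]]; rewrite E in ax xb.
case/orP: (H p ps) => h; lra.
Qed.

Lemma term_pos {R : realType} {p : R * R} {a b x y : R} :
  0 < p.1 -> (p.2 < a) || (b < p.2) -> a <= x <= b -> a <= y <= b ->
  0 < p.1 / ((x - p.2) * (y - p.2)).
Proof.
move=> h1 h2 /andP[ax xb] /andP[ay yb]; apply: divr_gt0 => //.
case/orP: h2 => h; first by apply: mulr_gt0; lra.
by rewrite -mulrNN; apply: mulr_gt0; lra.
Qed.

Lemma SS_ge0 {R : realType} {s : seq (R * R)} {a b x y : R} :
  all (fun p : R * R => 0 < p.1) s -> pfree s a b -> a <= x <= b -> a <= y <= b ->
  0 <= SS s x y.
Proof.
move=> /allP hv /allP hf hx hy; rewrite /SS big_seq; apply: sumr_ge0 => p ps.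
by apply: ltW; apply: term_pos hx hy; [apply: hv | apply: hf].
Qed.

Lemma SS_ge_term {R : realType} {s : seq (R * R)} {a b x y : R} {q : R * R} :
  all (fun p : R * R => 0 < p.1) s -> pfree s a b -> a <= x <= b -> a <= y <= b ->
  q \in s -> q.1 / ((x - q.2) * (y - q.2)) <= SS s x y.
Proof.
move=> hv hf hx hy; rewrite /SS; elim: s hv hf => [|p s IH] //= /andP[hp hv] /andP[hpf hf].
rewrite in_cons big_cons => /orP[/eqP -> | qs].
  rewrite lerDl; exact: (SS_ge0 hv hf hx hy).
have := IH hv hf qs; have := term_pos hp hpf hx hy; lra.
Qed.

Lemma SS_gt0 {R : realType} {s : seq (R * R)} {a b x y : R} :
  all (fun p : R * R => 0 < p.1) s -> pfree s a b -> a <= x <= b -> a <= y <= b ->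
  s != [::] -> 0 < SS s x y.
Proof.
case: s => [|p s] // hv hf hx hy _.
have h1 := SS_ge_term hv hf hx hy (mem_head p s).
move: hv hf => /= /andP[hp _] /andP[hpf _].
have := term_pos hp hpf hx hy; lra.
Qed.

Fixpoint pnd {R : realType} (t0 : R) (s : seq (R * R)) : {poly R} * {poly R} :=
  match s with
  | [::] => ('X - t0%:P, 1)
  | p :: s' => let nd := pnd t0 s' in
      (nd.1 * ('X - p.2%:P) - p.1%:P * nd.2, nd.2 * ('X - p.2%:P))
  end.

Lemma pnd_eval {R : realType} (t0 : R) (s : seq (R * R)) x :
  x \notin map snd s ->
  (pnd t0 s).2.[x] != 0 /\ (pnd t0 s).1.[x] = ev t0 s x * (pnd t0 s).2.[x].
Proof.
rewrite /ev; elim: s => [|p s IH] /=.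
  by move=> _; rewrite big_nil !hornerE; split; [apply: oner_neq0 | ring].
rewrite in_cons negb_or => /andP[xp xs]; have [h1 h2] := IH xs.
have hx : x - p.2 != 0 by rewrite subr_eq0.
rewrite !(hornerD, hornerN, hornerM, hornerX, hornerC) big_cons h2.
split; first by rewrite mulf_neq0.
field; exact: hx.
Qed.

Lemma ivt_step {R : realType} t0a sa t0b sb (lam th b : R) :
  th < b -> pfree sa th b -> pfree sb th b ->
  ev t0a sa th * ev t0b sb th < lam -> lam < ev t0a sa b * ev t0b sb b ->
  exists c, [/\ th < c < b, c \notin map snd sa, c \notin map snd sb &
                ev t0a sa c * ev t0b sb c = lam].
Proof.
move=> thb fa fb hth hb.
pose Da := (pnd t0a sa).2; pose Na := (pnd t0a sa).1.
pose Db := (pnd t0b sb).2; pose Nb := (pnd t0b sb).1.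
pose q := (Na * Nb - lam%:P * Da * Db) * (Da * Db).
have qE : forall x, th <= x <= b ->
  [/\ x \notin map snd sa, x \notin map snd sb &
   q.[x] = (ev t0a sa x * ev t0b sb x - lam) * (Da.[x] * Db.[x]) ^+ 2 /\
   0 < (Da.[x] * Db.[x]) ^+ 2].
  move=> x hx; have xa := pfree_notin fa hx; have xb := pfree_notin fb hx.
  have [da na] := pnd_eval t0a sa x xa; have [db nb] := pnd_eval t0b sb x xb.
  split => //; split; last by rewrite exprn_even_gt0 //= mulf_neq0.
  rewrite /q !(hornerD, hornerN, hornerM, hornerC) na nb; ring.
have [xa xb [qth pth]] := qE th ltac:(lra).
have [ya yb [qb pb]] := qE b ltac:(lra).
have q1 : q.[th] <= 0.
  rewrite qth; apply: ltW; rewrite pmulr_llt0 //; lra.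
have q2 : 0 <= q.[b].
  rewrite qb; apply: ltW; apply: mulr_gt0 => //; lra.
have [c /andP[c1 c2] /rootP rc] := poly_ivt (ltW thb) (introT andP (conj q1 q2)).
have [ca cb [qc pc]] := qE c ltac:(lra).
rewrite qc in rc.
have E : ev t0a sa c * ev t0b sb c = lam.
  move/eqP: rc; rewrite mulf_eq0 => /orP[/eqP h|]; first lra.
  by move=> /eqP h; rewrite h in pc; rewrite ltxx in pc.
exists c; split => //.
apply/andP; split.
  rewrite lt_neqAle c1 andbT; apply/eqP => h; rewrite -h in E; lra.
rewrite lt_neqAle c2 andbT; apply/eqP => h; rewrite h in E; lra.
Qed.

Lemma foldr_min {R : realType} (z : R) (l : seq R) :
  [/\ foldr Num.min z l <= z, (forall y, y \in l -> foldr Num.min z l <= y) &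
      (foldr Num.min z l = z \/ foldr Num.min z l \in l)].
Proof.
elim: l => [|a l [h1 h2 h3]] /=; first by split => //; left.
split.
- by rewrite ge_min h1 orbT.
- move=> y; rewrite in_cons => /orP[/eqP -> | yl]; first by rewrite ge_min lexx.
  by rewrite ge_min h2 ?orbT.
- case: (leP a (foldr Num.min z l)) => h.
    by right; rewrite mem_head.
  case: h3 => [->|hl]; [by left | by right; rewrite in_cons hl orbT].
Qed.

Lemma lower_bd {R : realType} t0 (s : seq (R * R)) th b :
  all (fun p : R * R => 0 < p.1) s -> pfree s th b -> th < b -> 0 <= ev t0 s th ->
  [/\ 0 <= SS s th b, (b - th) * (1 + SS s th b) <= ev t0 s b &
      0 <= (b - th) * (1 + SS s th b)].
Proof.
move=> hv hf thb h0.
have hth : th <= th <= b by lra.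
have hbb : th <= b <= b by lra.
have S0 := SS_ge0 hv hf hth hbb.
rewrite (ev_diff t0 s th b (pfree_notin hf hth) (pfree_notin hf hbb)).
split => //; first by lra.
apply: mulr_ge0; lra.
Qed.

Lemma eq_ler_lem {R : realType} (x : R) : x = 0 -> 0 <= x.
Proof. by move=> ->. Qed.

Lemma mainM {R : realType} t0a sa t0b sb (lam th : R) :
  all (fun p : R * R => 0 < p.1) sa -> all (fun p : R * R => 0 < p.1) sb ->
  (sa != [::]) || (sb != [::]) -> 0 < lam ->
  th \notin map snd sa -> th \notin map snd sb ->
  ev t0b sb th = 0 -> 0 <= ev t0a sa th ->
  exists b, [/\ th < b <= th + Num.sqrt lam, pfree sa th b, pfree sb th b &
              lam < ev t0a sa b * ev t0b sb b].
Proof.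
move=> va vb ne lam0 tha thb eb ea.
set s := Num.sqrt lam.
have s0 : 0 < s by rewrite sqrtr_gt0.
have ss : s ^+ 2 = lam by rewrite sqr_sqrtr // ltW.
set T := map snd (sa ++ sb).
have TE : forall t, (t \in T) = (t \in map snd sa) || (t \in map snd sb).
  by move=> t; rewrite /T map_cat mem_cat.
set L := [seq t <- T | (th < t) && (t <= th + s)].
set p := foldr Num.min (th + s) L.
have [pz pl pm] := foldr_min (th + s) L.
rewrite -/p in pz pl pm.
have thp : th < p.
  case: pm => [->|]; first lra.
  by rewrite mem_filter => /andP[/andP[]].
have claim : forall b, th <= b <= p -> b \notin T -> pfree sa th b && pfree sb th b.
  move=> b /andP[hb1 hb2] bT.
  have H : forall t, t \in T -> (t < th) || (b < t).
    move=> t tT.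
    have tth : t != th.
      by apply/eqP => E; move: tT; rewrite TE E (negbTE tha) (negbTE thb).
    have tb : t != b by apply: contraNneq bT => <-.
    case: (ltP t th) => //= h.
    have h' : th < t by rewrite lt_neqAle eq_sym tth h.
    case: (leP t (th + s)) => h2.
      have tL : t \in L by rewrite mem_filter h' h2 tT.
      have := pl t tL; rewrite lt_neqAle eq_sym tb /=; lra.
    lra.
  apply/andP; split; apply/allP => q qs; apply: H; rewrite TE (map_f _ qs) ?orbT //.
have sumb : forall c, th < c -> pfree sa th c -> pfree sb th c ->
   (c - th) ^+ 2 * (SS sa th c + SS sb th c) + (c - th) ^+ 2
     <= ev t0a sa c * ev t0b sb c.
  move=> c hb fa fb.
  have [Sa0 Sa1 Sa2] := lower_bd t0a sa th c va fa hb ea.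
  have [Sb0 Sb1 Sb2] := lower_bd t0b sb th c vb fb hb (eq_ler_lem _ eb).
  apply: le_trans (ler_pM Sa2 Sb2 Sa1 Sb1).
  have : 0 <= (c - th) ^+ 2 * (SS sa th c * SS sb th c).
    by apply: mulr_ge0; [rewrite sqr_ge0 | apply: mulr_ge0].
  set u := c - th; set x := SS sa th c; set y := SS sb th c.
  move=> H; have -> : u * (1 + x) * (u * (1 + y)) = u ^+ 2 * (x + y) + u ^+ 2 + u ^+ 2 * (x * y) by ring.
  lra.
case: (boolP (p \in T)) => pT.
  move: pT; rewrite /T => /mapP [q qin pq].
  have mu0 : 0 < q.1.
    by move: qin; rewrite mem_cat => /orP[] qi; [exact: (allP va) | exact: (allP vb)].
  set d := p - th.
  have dE : d = p - th by [].
  have d0 : 0 < d by lra.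
  set k := Num.min (1/2) (q.1 / (8 * lam)).
  have k0 : 0 < k.
    rewrite lt_min; apply/andP; split; first lra.
    by apply: divr_gt0 => //; lra.
  have k1 : k <= 1/2 by rewrite ge_min lexx.
  have k2 : k * (8 * lam) <= q.1.
    by rewrite -ler_pdivlMr ?ge_min ?lexx ?orbT //; lra.
  set b := p - d * k.
  have dk : 0 < d * k by apply: mulr_gt0.
  have dk2 : d * k <= d * (1/2) by apply: ler_wpM2l; [apply: ltW|].
  have thb' : th < b by rewrite /b; lra.
  have bp : b < p by rewrite /b; lra.
  have bT : b \notin T.
    apply/negP => bT.
    have bL : b \in L by rewrite mem_filter bT andbT; apply/andP; split; lra.
    have := pl b bL; lra.
  have [fa fb] : pfree sa th b /\ pfree sb th b.
    by apply/andP; apply: claim => //; apply/andP; split; lra.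
  exists b; split => //; first by apply/andP; split; lra.
  have H := sumb b thb' fa fb.
  have hth : th <= th <= b by lra.
  have hbb : th <= b <= b by lra.
  have Sa0 := SS_ge0 va fa hth hbb; have Sb0 := SS_ge0 vb fb hth hbb.
  have T1 : q.1 / ((th - q.2) * (b - q.2)) <= SS sa th b + SS sb th b.
    move: qin; rewrite mem_cat => /orP[] qi;
    [have := SS_ge_term va fa hth hbb qi | have := SS_ge_term vb fb hth hbb qi]; lra.
  have E1 : (th - q.2) * (b - q.2) = d * (d * k) by rewrite -pq /b /d; ring.
  rewrite E1 in T1.
  set X := q.1 / (d * (d * k)) in T1.
  have XE : X * (d * (d * k)) = q.1.
    by rewrite /X divfK // mulf_neq0 // ?lt0r_neq0.
  have ub : b - th = d * (1 - k) by rewrite /b /d; ring.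
  rewrite ub in H.
  set Y := d ^+ 2 * X.
  have YE : Y * k = q.1 by rewrite -XE /Y; ring.
  have Y8 : 8 * lam <= Y.
    rewrite -(ler_pM2r k0) YE; lra.
  have T2 : (d * (1 - k)) ^+ 2 * X <= (d * (1 - k)) ^+ 2 * (SS sa th b + SS sb th b).
    by apply: ler_wpM2l => //; rewrite sqr_ge0.
  have T3 : (d * (1 - k)) ^+ 2 * X = (1 - k) ^+ 2 * Y by rewrite /Y; ring.
  have T4 : Y / 4 <= (1 - k) ^+ 2 * Y.
    have Y0 : 0 <= Y by lra.
    have : 1 / 4 <= (1 - k) ^+ 2 by rewrite expr2; nra.
    move=> h; have := ler_wpM2l Y0 h; lra.
  have H0 : 0 <= (d * (1 - k)) ^+ 2 by rewrite sqr_ge0.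
  lra.
have pE : p = th + s.
  case: pm => // pL; move: pL; rewrite mem_filter => /andP[_ pT']; by rewrite pT' in pT.
have [fa fb] : pfree sa th p /\ pfree sb th p.
  by apply/andP; apply: claim => //; rewrite lexx andbT ltW.
exists p; split => //; first by rewrite thp pE lexx.
have := sumb p thp fa fb; rewrite (_ : p - th = s) ?ss; last by rewrite pE; ring.
move=> H.
have hth : th <= th <= p by lra.
have hpp : th <= p <= p by lra.
have Spos : 0 < SS sa th p + SS sb th p.
  have := SS_ge0 va fa hth hpp; have := SS_ge0 vb fb hth hpp.
  case/orP: ne => [nea|neb].
    have := SS_gt0 va fa hth hpp nea; lra.
  have := SS_gt0 vb fb hth hpp neb; lra.
have : 0 < lam * (SS sa th p + SS sb th p) by apply: mulr_gt0.
lra.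
Qed.

Definition refl {R : realType} (s : seq (R * R)) := map (fun p : R * R => (p.1, - p.2)) s.

Lemma refl_valid {R : realType} (s : seq (R * R)) :
  all (fun p : R * R => 0 < p.1) (refl s) = all (fun p : R * R => 0 < p.1) s.
Proof. by rewrite /refl all_map. Qed.

Lemma refl_ne {R : realType} (s : seq (R * R)) : (refl s != [::]) = (s != [::]).
Proof. by case: s. Qed.

Lemma refl_pole {R : realType} (s : seq (R * R)) y :
  (y \in map snd (refl s)) = (- y \in map snd s).
Proof.
have -> : map snd (refl s) = map -%R (map snd s) by rewrite /refl -!map_comp.
by rewrite -{1}(opprK y) (mem_map (@oppr_inj _)).
Qed.

Lemma refl_ev {R : realType} t0 (s : seq (R * R)) (x : R) :
  ev (- t0) (refl s) x = - ev t0 s (- x).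
Proof.
rewrite /ev /refl big_map /=.
have -> : \sum_(j <- s) j.1 / (x - - j.2) = - \sum_(j <- s) j.1 / (- x - j.2).
  rewrite -sumrN; apply: eq_bigr => p _.
  by rewrite -[x - - p.2]opprK opprD opprK invrN mulrN.
ring.
Qed.

Lemma concl {R : realType} (A B lam : R) : lam != 0 -> A * B = lam -> B != 0 /\ A - lam / B = 0.
Proof.
move=> l0 E; have B0 : B != 0 by apply: contraNneq l0 => h; rewrite -E h mulr0.
split => //; rewrite -E mulfK //; ring.
Qed.

Theorem lemma12 (R : realType) (alpha beta : pfrac R) (lam theta : R) :
  pf_valid alpha -> pf_valid beta ->
  pf_has_pole alpha || pf_has_pole beta ->
  0 < lam ->
  ~~ pf_pole beta theta -> pf_eval beta theta = 0 ->
  ~~ pf_pole alpha theta ->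
  exists theta' : R,
    [/\ theta - Num.sqrt lam < theta' < theta + Num.sqrt lam,
        ~~ pf_pole beta theta', pf_eval beta theta' != 0,
        ~~ pf_pole alpha theta' &
        pf_eval alpha theta' - lam / pf_eval beta theta' = 0].
Proof.
case: alpha => t0a sa; case: beta => t0b sb.
rewrite /pf_valid /pf_has_pole /pf_pole /pf_eval /= -/(ev t0b sb theta).
move=> va vb ne lam0 nb eb na.
have l0 : lam != 0 by rewrite lt0r_neq0.
have s0 : 0 < Num.sqrt lam by rewrite sqrtr_gt0.
case: (leP 0 (ev t0a sa theta)) => ha.
  have [b [/andP[tb bs] fa fb hb]] := mainM t0a sa t0b sb lam theta va vb ne lam0 na nb eb ha.
  have h0 : ev t0a sa theta * ev t0b sb theta < lam by rewrite eb mulr0.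
  have [c [/andP[c1 c2] ca cb E]] := ivt_step t0a sa t0b sb lam theta b tb fa fb h0 hb.
  have [B0 E'] := concl _ _ _ l0 E.
  exists c; split => //; apply/andP; split; lra.
have va' : all (fun p : R * R => 0 < p.1) (refl sa) by rewrite refl_valid.
have vb' : all (fun p : R * R => 0 < p.1) (refl sb) by rewrite refl_valid.
have ne' : (refl sa != [::]) || (refl sb != [::]) by rewrite !refl_ne.
have na' : - theta \notin map snd (refl sa) by rewrite refl_pole opprK.
have nb' : - theta \notin map snd (refl sb) by rewrite refl_pole opprK.
have eb' : ev (- t0b) (refl sb) (- theta) = 0 by rewrite refl_ev opprK eb oppr0.
have ha' : 0 <= ev (- t0a) (refl sa) (- theta) by rewrite refl_ev opprK; lra.
have [b [/andP[tb bs] fa fb hb]] := mainM (- t0a) (refl sa) (- t0b) (refl sb) lam (- theta) va' vb' ne' lam0 na' nb' eb' ha'.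
have h0 : ev (- t0a) (refl sa) (- theta) * ev (- t0b) (refl sb) (- theta) < lam
  by rewrite eb' mulr0.
have [c [/andP[c1 c2] ca cb E]] := ivt_step (- t0a) (refl sa) (- t0b) (refl sb) lam (- theta) b tb fa fb h0 hb.
rewrite !refl_ev mulrNN in E.
rewrite !refl_pole in ca cb.
have [B0 E'] := concl _ _ _ l0 E.
exists (- c); split => //; apply/andP; split; lra.
Qed.
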